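(* Let $M$ be a triangulated ideal 3-manifold with $\partial M=\varnothing$ and topological ideal triangulation $\mathcal D$. There is a branched covering $M^{\prime}$ of $M$ and a topological ideal triangulation $\mathcal{D}^{\prime}$ of $M^{\prime}$ such that $i_{\mathcal{D}^{\prime}}(e^{\prime})\geq6$ for each edge $e^{\prime}$ of $\mathcal{D}^{\prime}$.
   Context: A topological ideal tetrahedron is a space homeomorphic to a 3-simplex with its vertices removed. A triangulated ideal 3-manifold is a non-compact orientable 3-manifold obtained from a finite disjoint union of topological ideal tetrahedra by gluing faces of distinct tetrahedra pairwise via homeomorphisms, every face being glued; the tetrahedra with their faces and edges form its topological ideal triangulation. The index $i_{\mathcal D}(e)$ of an edge $e$ of a triangulation $\mathcal D$ is the integer $k\ge2$ such that every point of $e$ has a closed neighbourhood in the 2-skeleton of $\mathcal D$ homeomorphic to $k$ closed half-discs glued along their diameter. *)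

(* Defs.v *)
From mathcomp Require Import all_boot all_fingroup.
Set Implicit Arguments. Unset Strict Implicit. Unset Printing Implicit Defensive.

(* Each tetrahedron has
   vertices 'I_4; face f of t is the face opposite vertex f.
   [partner t f] is the face (u, g) glued to face f of t, and
   [gmap t f] is the vertex bijection from t to u realizing the gluing
   (it sends the face opposite f onto the face opposite g). *)
Record gluing (T : finType) := Gluing {
  partner : T -> 'I_4 -> T * 'I_4;
  gmap : T -> 'I_4 -> {perm 'I_4}
}.

Section Gluing.
Variables (T : finType) (G : gluing T).

Definition gluing_ok : Prop :=
  forall t f,
    [/\ (partner G t f).1 != t,
        partner G (partner G t f).1 (partner G t f).2 = (t, f),
        gmap G t f f = (partner G t f).2 &
        forall x, gmap G (partner G t f).1 (partner G t f).2 (gmap G t f x) = x].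

(* orientability: tetrahedra can be oriented so that all gluings are
   orientation-reversing, i.e. the gluing permutation is odd exactly when
   the two tetrahedra carry the same orientation flag *)
Definition orientable_gluing : Prop :=
  exists o : T -> bool, forall t f,
    odd_perm (gmap G t f) = (o t == o (partner G t f).1).

(* oriented edges (t, a, b), a != b; one elementary identification step
   across a glued face containing the edge *)
Definition edge_step : rel (T * 'I_4 * 'I_4) :=
  fun x y => let: (t, a, b) := x in let: (u, c, d) := y in
    [exists f : 'I_4, [&& f != a, f != b, (partner G t f).1 == u,
                          gmap G t f a == c & gmap G t f b == d]].

(* no edge is identified with itself with reversed orientation
   (this is exactly what makes the quotient a 3-manifold) *)
Definition no_reversed_edge : Prop :=
  forall t a b, a != b -> ~~ connect edge_step (t, a, b) (t, b, a).

Definition triangulated_ideal_3manifold : Prop :=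
  [/\ gluing_ok, orientable_gluing & no_reversed_edge].

(* the index of the edge of the triangulation containing the edge {a,b} of
   tetrahedron t: the number of tetrahedron-edges (u,{c,d}) identified to it *)
Definition edge_index (t : T) (a b : 'I_4) : nat :=
  #|[set y : T * 'I_4 * 'I_4 |
      let: (u, c, d) := y in
      (c < d) && (connect edge_step (t, a, b) y || connect edge_step (t, b, a) y)]|.

End Gluing.

(* A (simplicial) branched covering of the triangulated manifold given by G
   by the one given by G': a surjection of tetrahedra compatible with all
   face gluings; topologically it is a branched covering branched along edges. *)
Definition simplicial_branched_cover (T' T : finType)
    (G' : gluing T') (G : gluing T) (p : T' -> T) : Prop :=
  (forall t : T, exists t' : T', p t' = t) /\
  forall t' f,
    partner G (p t') f = (p (partner G' t' f).1, (partner G' t' f).2) /\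
    gmap G (p t') f = gmap G' t' f.

(* Main.v *)
Require Import Defs.
From mathcomp Require Import all_boot all_fingroup all_algebra.
From mathcomp Require Import zify.
Set Implicit Arguments. Unset Strict Implicit. Unset Printing Implicit Defensive.

Definition i0 : 'I_4 := @Ordinal 4 0 isT.
Definition i1 : 'I_4 := @Ordinal 4 1 isT.
Definition i2 : 'I_4 := @Ordinal 4 2 isT.
Definition i3 : 'I_4 := @Ordinal 4 3 isT.

Lemma pig4 (a b f x y : 'I_4) : a != b -> a != f -> b != f ->
  x != a -> x != b -> x != f -> y != a -> y != b -> y != f -> x = y.
Proof.
move: a b f x y => [a Ha] [b Hb] [f Hf] [x Hx] [y Hy]; rewrite -!val_eqE /= => *.
apply/val_inj => /=; lia.
Qed.

Lemma exists4 (a b f : 'I_4) : exists h : 'I_4, [&& h != a, h != b & h != f].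
Proof.
case: (boolP [&& i0 != a, i0 != b & i0 != f]) => [H|H0]; first by exists i0.
case: (boolP [&& i1 != a, i1 != b & i1 != f]) => [H|H1]; first by exists i1.
case: (boolP [&& i2 != a, i2 != b & i2 != f]) => [H|H2]; first by exists i2.
case: (boolP [&& i3 != a, i3 != b & i3 != f]) => [H|H3]; first by exists i3.
exfalso; move: H0 H1 H2 H3; move: a b f => [a Ha] [b Hb] [f Hf].
rewrite -!val_eqE /= => *; lia.
Qed.

Fact tau_key : unit. Proof. exact: tt. Qed.
Definition tau_def (a b f : 'I_4) : {perm 'I_4} :=
  odflt 1%g [pick s : {perm 'I_4} | [&& s i0 == a, s i1 == b & s i2 == f]].
Definition tau := locked_with tau_key tau_def.
Lemma tauE : tau = tau_def. Proof. by rewrite /tau; case: tau_key. Qed.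
Definition par a b f := odd_perm (tau a b f).

Lemma tau_ex (a b f : 'I_4) : a != b -> a != f -> b != f ->
  exists s : {perm 'I_4}, [&& s i0 == a, s i1 == b & s i2 == f].
Proof.
move=> Hab Haf Hbf; have [h /and3P[Hha Hhb Hhf]] := exists4 a b f.
pose g := fun i : 'I_4 => if val i == 0 then a else if val i == 1 then b
                          else if val i == 2 then f else h.
have Hba : b != a by rewrite eq_sym.
have Hfa : f != a by rewrite eq_sym.
have Hfb : f != b by rewrite eq_sym.
have Hah : a != h by rewrite eq_sym.
have Hbh : b != h by rewrite eq_sym.
have Hfh : f != h by rewrite eq_sym.
have ginj : injective g.
  move=> [i Hi] [j Hj]; rewrite /g /= => E; apply/val_inj => /=; move/eqP: E.
  case: i Hi => [|[|[|[|i]]]] Hi //; case: j Hj => [|[|[|[|j]]]] Hj //=;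
   by rewrite ?(negbTE Hab) ?(negbTE Haf) ?(negbTE Hbf) ?(negbTE Hba) ?(negbTE Hfa)
     ?(negbTE Hfb) ?(negbTE Hha) ?(negbTE Hhb) ?(negbTE Hhf) ?(negbTE Hah)
     ?(negbTE Hbh) ?(negbTE Hfh).
exists (perm ginj); by rewrite !permE /g /= !eqxx.
Qed.

Lemma tau_spec (a b f : 'I_4) : a != b -> a != f -> b != f ->
  [/\ tau a b f i0 = a, tau a b f i1 = b & tau a b f i2 = f].
Proof.
move=> Hab Haf Hbf; rewrite tauE /tau_def; case: pickP => [s /and3P[/eqP-> /eqP-> /eqP->] //|H].
have [s Hs] := tau_ex Hab Haf Hbf; by rewrite H in Hs.
Qed.

Lemma perm_uniq3 (s1 s2 : {perm 'I_4}) :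
  s1 i0 = s2 i0 -> s1 i1 = s2 i1 -> s1 i2 = s2 i2 -> s1 = s2.
Proof.
move=> E0 E1 E2.
have E3 : s1 i3 = s2 i3.
  apply: (@pig4 (s1 i0) (s1 i1) (s1 i2)); rewrite ?(inj_eq perm_inj) //.
  1-3: by rewrite ?E0 ?E1 ?E2; apply/eqP => /perm_inj /(congr1 val).
apply/(permP s1 s2) => -[[|[|[|[|i]]]] Hi]; last by [].
- have -> : Ordinal Hi = i0 by apply: val_inj.
  exact: E0.
- have -> : Ordinal Hi = i1 by apply: val_inj.
  exact: E1.
- have -> : Ordinal Hi = i2 by apply: val_inj.
  exact: E2.
- have -> : Ordinal Hi = i3 by apply: val_inj.
  exact: E3.
Qed.

Lemma par_perm (s : {perm 'I_4}) a b f : a != b -> a != f -> b != f ->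
  par (s a) (s b) (s f) = odd_perm s (+) par a b f.
Proof.
move=> Hab Haf Hbf.
have Hab' : s a != s b by rewrite (inj_eq perm_inj).
have Haf' : s a != s f by rewrite (inj_eq perm_inj).
have Hbf' : s b != s f by rewrite (inj_eq perm_inj).
have [A0 A1 A2] := tau_spec Hab Haf Hbf.
have [B0 B1 B2] := tau_spec Hab' Haf' Hbf'.
rewrite /par (@perm_uniq3 (tau (s a) (s b) (s f)) (tau a b f * s)).
  by rewrite odd_permM addbC.
all: by rewrite permM ?A0 ?A1 ?A2 ?B0 ?B1 ?B2.
Qed.

Lemma par_flip a b f h : a != b -> a != f -> b != f -> h != a -> h != b -> h != f ->
  par a b h = ~~ par a b f.
Proof.
move=> Hab Haf Hbf Hha Hhb Hhf.
have Hah : a != h by rewrite eq_sym.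
have Hbh : b != h by rewrite eq_sym.
have [A0 A1 A2] := tau_spec Hab Haf Hbf.
have [B0 B1 B2] := tau_spec Hab Hah Hbh.
have A3 : tau a b f i3 = h.
  have T3 : forall j, j != i3 -> tau a b f i3 != tau a b f j.
    by move=> j; rewrite (inj_eq perm_inj) eq_sym.
  apply: (@pig4 a b f) => //.
  - by have := T3 i0 isT; rewrite A0.
  - by have := T3 i1 isT; rewrite A1.
  - by have := T3 i2 isT; rewrite A2.
rewrite /par (@perm_uniq3 (tau a b h) (tperm i2 i3 * tau a b f)).
  by rewrite odd_permM odd_tperm.
- by rewrite permM tpermD // B0 A0.
- by rewrite permM tpermD // B1 A1.
- by rewrite permM tpermL B2 A3.
Qed.

Import GRing.Theory.
Definition Fib (T : finType) := {ffun T * 'I_4 * 'I_4 -> 'Z_6}.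

Definition sgn (T : finType) (o : T -> bool) (t : T) (f a b : 'I_4) : 'Z_6 :=
  if o t (+) par a b f then 1%R else (-1)%R.

Definition pi (T : finType) (D : gluing T) (t : T) (f : 'I_4)
   (y : T * 'I_4 * 'I_4) : T * 'I_4 * 'I_4 :=
  let u := (partner D t f).1 in let g := (partner D t f).2 in
  if [&& y.1.1 == u, y.1.2 != g, y.2 != g & y.1.2 != y.2]
  then (t, gmap D u g y.1.2, gmap D u g y.2)
  else if [&& y.1.1 == t, y.1.2 != f, y.2 != f & y.1.2 != y.2]
  then (u, gmap D t f y.1.2, gmap D t f y.2)
  else y.

Definition sh (T : finType) (D : gluing T) (o : T -> bool) (t : T) (f : 'I_4)
   (y : T * 'I_4 * 'I_4) : 'Z_6 :=
  let u := (partner D t f).1 in let g := (partner D t f).2 in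
  if [&& y.1.1 == u, y.1.2 != g, y.2 != g & y.1.2 != y.2]
  then sgn o t f (gmap D u g y.1.2) (gmap D u g y.2)
  else if [&& y.1.1 == t, y.1.2 != f, y.2 != f & y.1.2 != y.2]
  then (- sgn o t f y.1.2 y.2)%R
  else 0%R.

Definition phi (T : finType) (D : gluing T) (o : T -> bool) (t : T) (f : 'I_4)
  (x : Fib T) : Fib T := [ffun y => (x (pi D t f y) + sh D o t f y)%R].

Definition cover (T : finType) (D : gluing T) (o : T -> bool) : gluing (T * Fib T)%type :=
  @Gluing (T * Fib T)%type
    (fun tx f => (((partner D tx.1 f).1, phi D o tx.1 f tx.2), (partner D tx.1 f).2))
    (fun tx f => gmap D tx.1 f).

Definition orient_by (T : finType) (D : gluing T) (o : T -> bool) :=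
  forall t f, odd_perm (gmap D t f) = (o t == o (partner D t f).1).

Lemma sgn_anti (T : finType) (D : gluing T) (o : T -> bool) t f a b :
  gluing_ok D -> orient_by D o -> a != b -> a != f -> b != f ->
  sgn o (partner D t f).1 (partner D t f).2 (gmap D t f a) (gmap D t f b)
  = (- sgn o t f a b)%R.
Proof.
move=> Hok Hor Hab Haf Hbf; have [_ _ Hgf _] := Hok t f.
rewrite /sgn -Hgf par_perm // Hor.
by case: (o t); case: (o (partner D t f).1); case: (par a b f); rewrite /= ?opprK.
Qed.

Lemma phiK (T : finType) (D : gluing T) (o : T -> bool) t f x :
  gluing_ok D -> orient_by D o ->
  phi D o (partner D t f).1 (partner D t f).2 (phi D o t f x) = x.
Proof.
move=> Hok Hor.
have [Hne Hpp Hgf Hinv] := Hok t f.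
have Hinv' : forall y, gmap D t f (gmap D (partner D t f).1 (partner D t f).2 y) = y.
  move=> y; have [_ _ _ H] := Hok (partner D t f).1 (partner D t f).2.
  by move: H; rewrite Hpp; apply.
have Hanti := fun a b => @sgn_anti T D o t f a b Hok Hor.
apply/ffunP => -[[w c] d]; rewrite /phi !ffunE /pi /sh.
move: Hne Hpp Hgf Hinv Hinv' Hanti.
case: (partner D t f) => u g /= Hne Hpp Hgf Hinv Hinv' Hanti.
rewrite Hpp /=.
have Hm'g : gmap D u g g = f by rewrite -{2}Hgf Hinv.
have Htu : (t == u) = false by apply/negbTE; rewrite eq_sym.
have Hut : (u == t) = false by apply/negbTE.
case H1: [&& w == t, c != f, d != f & c != d].
  move/and4P: H1 => [/eqP Ewt Hcf Hdf Hcd]; subst w.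
  have Hc : gmap D t f c != g by rewrite -Hgf (inj_eq perm_inj).
  have Hd : gmap D t f d != g by rewrite -Hgf (inj_eq perm_inj).
  have Hcd' : gmap D t f c != gmap D t f d by rewrite (inj_eq perm_inj).
  rewrite /= eqxx Hc Hd Hcd' /= !Hinv Hanti //.
  by rewrite addrK.
case H2: [&& w == u, c != g, d != g & c != d].
  move/and4P: H2 => [/eqP Ewu Hcg Hdg Hcd]; subst w.
  have Hc : gmap D u g c != f by rewrite -Hm'g (inj_eq perm_inj).
  have Hd : gmap D u g d != f by rewrite -Hm'g (inj_eq perm_inj).
  have Hcd' : gmap D u g c != gmap D u g d by rewrite (inj_eq perm_inj).
  rewrite /= Htu eqxx Hc Hd Hcd' /= !Hinv'.
  have := Hanti _ _ Hcd' Hc Hd; rewrite !Hinv' => ->.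
  by rewrite opprK addrNK.
by rewrite /= H2 H1 !addr0.
Qed.

Lemma phi_step (T : finType) (D : gluing T) (o : T -> bool) t f x a b :
  gluing_ok D -> a != b -> a != f -> b != f ->
  phi D o t f x ((partner D t f).1, gmap D t f a, gmap D t f b)
  = (x (t, a, b) + sgn o t f a b)%R.
Proof.
move=> Hok Hab Haf Hbf.
have [Hne Hpp Hgf Hinv] := Hok t f.
rewrite /phi ffunE /pi /sh.
move: Hne Hpp Hgf Hinv.
case: (partner D t f) => u g /= Hne Hpp Hgf Hinv.
have Hc : gmap D t f a != g by rewrite -Hgf (inj_eq perm_inj).
have Hd : gmap D t f b != g by rewrite -Hgf (inj_eq perm_inj).
have Hcd' : gmap D t f a != gmap D t f b by rewrite (inj_eq perm_inj).
by rewrite eqxx Hc Hd Hcd' /= !Hinv.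
Qed.

Lemma connect_hom (A B : finType) (e : rel A) (e0 : rel B) (h : A -> B) :
  (forall x y, e x y -> e0 (h x) (h y)) ->
  forall x y, connect e x y -> connect e0 (h x) (h y).
Proof.
move=> He x y /connectP[p Hp ->]; elim: p x Hp => [|z p IH] x /=.
  by rewrite connect0.
case/andP => Hxz /IH; apply: connect_trans; exact/connect1/He.
Qed.

Definition revE (A : Type) (X : A * 'I_4 * 'I_4) : A * 'I_4 * 'I_4 := (X.1.1, X.2, X.1.2).

Lemma step_rev (T : finType) (G : gluing T) x y :
  edge_step G x y -> edge_step G (revE x) (revE y).
Proof.
case: x => [[t a] b]; case: y => [[u c] d] /=.
case/existsP => f /and5P[H1 H2 H3 H4 H5]; apply/existsP; exists f.
by rewrite H1 H2 H3 H4 H5.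
Qed.

Lemma step_sym (T : finType) (G : gluing T) x y :
  gluing_ok G -> edge_step G x y -> edge_step G y x.
Proof.
move=> Hok; case: x => [[t a] b]; case: y => [[u c] d] /=.
case/existsP => f /and5P[Hfa Hfb /eqP Hu /eqP Hc /eqP Hd]; apply/existsP.
exists (partner G t f).2.
have [_ Hpp Hgf Hinv] := Hok t f.
have Hga : (partner G t f).2 != gmap G t f a by rewrite -Hgf (inj_eq perm_inj).
have Hgb : (partner G t f).2 != gmap G t f b by rewrite -Hgf (inj_eq perm_inj).
subst u c d.
by rewrite Hga Hgb Hpp /= !Hinv !eqxx.
Qed.

Definition projE (T : finType) (X : (T * Fib T) * 'I_4 * 'I_4) : T * 'I_4 * 'I_4 :=
  (X.1.1.1, X.1.2, X.2).

Lemma step_proj (T : finType) (D : gluing T) (o : T -> bool) X Y :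
  edge_step (cover D o) X Y -> edge_step D (projE X) (projE Y).
Proof.
case: X => [[[t x] a] b]; case: Y => [[[u y] c] d] /=.
case/existsP => f /and5P[H1 H2 /eqP H3 H4 H5]; apply/existsP; exists f.
by case: H3 => -> _; rewrite H1 H2 H4 H5 eqxx.
Qed.

Lemma cover_tri (T : finType) (D : gluing T) (o : T -> bool) :
  gluing_ok D -> orient_by D o -> no_reversed_edge D ->
  triangulated_ideal_3manifold (cover D o).
Proof.
move=> Hok Hor Hnr; split.
- move=> [t x] f /=; have [Hne Hpp Hgf Hinv] := Hok t f.
  split => //.
  + by rewrite xpair_eqE negb_and Hne.
  + by rewrite phiK // Hpp.
- by exists (fun tx => o tx.1) => -[t x] f /=; rewrite Hor.
- move=> tx a b Hab; apply/negP => /(connect_hom (@step_proj T D o)) /=.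
  by apply/negP; apply: Hnr.
Qed.

Definition other2 (a b : 'I_4) : 'I_4 := odflt ord0 [pick f : 'I_4 | (f != a) && (f != b)].
Definition other3 (a b c : 'I_4) : 'I_4 :=
  odflt ord0 [pick f : 'I_4 | [&& f != a, f != b & f != c]].

Lemma other3P a b c : [&& other3 a b c != a, other3 a b c != b & other3 a b c != c].
Proof.
rewrite /other3; case: pickP => [//|H]; have [h Hh] := exists4 a b c.
by rewrite H in Hh.
Qed.

Lemma other2P a b : (other2 a b != a) && (other2 a b != b).
Proof.
rewrite /other2; case: pickP => [//|H]; have [h /and3P[H1 H2 _]] := exists4 a b b.
by have := H h; rewrite H1 H2.
Qed.

Definition face_of (T : finType) (o : T -> bool) (t : T) (a b : 'I_4) : 'I_4 :=
  let f1 := other2 a b in if o t (+) par a b f1 then f1 else other3 a b f1.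

Lemma face_ofP (T : finType) (o : T -> bool) (t : T) (a b : 'I_4) : a != b ->
  [&& face_of o t a b != a, face_of o t a b != b & o t (+) par a b (face_of o t a b)].
Proof.
move=> Hab; rewrite /face_of.
have /andP[H1 H2] := other2P a b.
have /and3P[H3 H4 H5] := other3P a b (other2 a b).
case E: (o t (+) par a b (other2 a b)); first by rewrite H1 H2 E.
rewrite H3 H4 /= (@par_flip a b (other2 a b)) // ?(eq_sym a) ?(eq_sym b) //.
by rewrite addbN E.
Qed.

Definition nxt (T : finType) (D : gluing T) (o : T -> bool)
    (X : (T * Fib T) * 'I_4 * 'I_4) : (T * Fib T) * 'I_4 * 'I_4 :=
  let t := X.1.1.1 in let a := X.1.2 in let b := X.2 in
  let f := face_of o t a b in
  ((partner (cover D o) X.1.1 f).1, gmap D t f a, gmap D t f b).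

Definition Fv (T : finType) (X : (T * Fib T) * 'I_4 * 'I_4) : 'Z_6 := X.1.1.2 (projE X).

Lemma nxtP (T : finType) (D : gluing T) (o : T -> bool) X :
  gluing_ok D -> X.1.2 != X.2 ->
  [/\ edge_step (cover D o) X (nxt D o X), (nxt D o X).1.2 != (nxt D o X).2
    & Fv (nxt D o X) = (Fv X + 1)%R].
Proof.
case: X => [[[t x] a] b] /= Hok Hab.
have /and3P[Hfa Hfb Hpos] := face_ofP o t Hab.
move: Hfa Hfb Hpos; set f := face_of o t a b => Hfa Hfb Hpos.
split.
- by apply/existsP; exists f; rewrite Hfa Hfb !eqxx.
- by rewrite (inj_eq perm_inj).
- rewrite /Fv /projE /= phi_step // ?(eq_sym a) ?(eq_sym b) //.
  by rewrite /sgn Hpos.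
Qed.

Lemma iterP (T : finType) (D : gluing T) (o : T -> bool) X0 :
  gluing_ok D -> X0.1.2 != X0.2 -> forall i,
  [/\ connect (edge_step (cover D o)) X0 (iter i (nxt D o) X0),
      (iter i (nxt D o) X0).1.2 != (iter i (nxt D o) X0).2
    & Fv (iter i (nxt D o) X0) = (Fv X0 + i%:R)%R].
Proof.
move=> Hok H0; elim=> [|i [IH1 IH2 IH3]] /=.
  by split => //; rewrite addr0.
have [S1 S2 S3] := nxtP o Hok IH2.
split => //.
- exact: connect_trans IH1 (connect1 S1).
- by rewrite S3 IH3 -natr1 addrA.
Qed.

Theorem proposition3p9 (T : finType) (D : gluing T) :
  triangulated_ideal_3manifold D ->
  exists (T' : finType) (D' : gluing T') (p : T' -> T),
    [/\ triangulated_ideal_3manifold D',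
        simplicial_branched_cover D' D p &
        forall (t' : T') (a b : 'I_4), a != b -> 6 <= edge_index D' t' a b].
Proof.
case=> Hok [o Hor] Hnr.
have Htri := @cover_tri T D o Hok Hor Hnr.
exists (T * Fib T)%type, (cover D o), fst.
split => //.
- split.
  + by move=> t; exists (t, [ffun => 0%R]).
  + by move=> [t x] f /=; split => //; case: (partner D t f).
move=> t' a b Hab.
have [Hok' _ Hnr'] := Htri.
set e' := edge_step (cover D o).
have Hsym : connect_sym e'.
  apply: sym_connect_sym => x y; apply/idP/idP; exact: step_sym.
pose X0 := (t', a, b).
pose Y i := iter i (nxt D o) X0.
have HY : forall i, [/\ connect e' X0 (Y i), (Y i).1.2 != (Y i).2
                      & Fv (Y i) = (Fv X0 + i%:R)%R].
  by move=> i; apply: iterP.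
pose srt (X : (T * Fib T) * 'I_4 * 'I_4) := if X.1.2 < X.2 then X else revE X.
have revK : forall X : (T * Fib T) * 'I_4 * 'I_4, revE (revE X) = X by case=> [[? ?] ?].
have Hnotrev : forall i j, Y i <> revE (Y j).
  move=> i j E; have [C1 _ _] := HY i; have [C2 _ _] := HY j.
  have C3 := connect_hom (@step_rev _ (cover D o)) C2.
  rewrite -E in C3.
  have C4 : connect e' X0 (revE X0).
    by rewrite Hsym; apply: connect_trans C3 _; rewrite Hsym.
  by move: (Hnr' t' a b Hab); rewrite C4.
have HYinj : forall i j : 'I_6, Y i = Y j -> i = j.
  move=> i j E; have [_ _ F1] := HY i; have [_ _ F2] := HY j.
  move: F1; rewrite E F2 => /addrI H; apply/val_inj.
  move: H => /(congr1 (@nat_of_ord _)); rewrite !val_Zp_nat // !modn_small //.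
have Hinj : injective (fun i : 'I_6 => srt (Y i)).
  move=> i j /=; rewrite /srt; case: ifP => _; case: ifP => _ E.
  - exact: HYinj.
  - by case: (Hnotrev i j).
  - by case: (Hnotrev j i).
  - by apply: HYinj; have := congr1 (@revE _) E; rewrite !revK.
have H6 : #|[set srt (Y i) | i : 'I_6]| = 6 by rewrite card_imset // card_ord.
apply: (@leq_trans #|[set srt (Y i) | i : 'I_6]|); first by rewrite H6.
rewrite /edge_index; apply: subset_leq_card.
apply/subsetP => _ /imsetP[i _ ->]; rewrite inE.
have [C1 Hne _] := HY i.
rewrite /srt; case: (Y i) C1 Hne => [[u c] d] /= C1 Hne.
case: ifP => Hcd /=; first by rewrite Hcd C1.
have Hdc : d < c by rewrite ltn_neqAle eq_sym Hne leqNgt Hcd.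
have C2 := connect_hom (@step_rev _ (cover D o)) C1.
by rewrite Hdc /=; rewrite /= in C2; rewrite C2 orbT.
Qed.
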